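(* Let $n$ be a positive integer with $n \equiv 3 \pmod 6$ and \[n \notin \{9, 15, 21, 141, 153, 165, 177, 189, 231, 249, 261, 285, 351, 357\},\] and let $\rho$ be an integer with $1 \le \rho \le n/3$. Then there exists an $(n+\rho,4)$-packing with exactly $\rho n/3$ blocks in which the largest partial parallel class has size $\rho$.
   Context: For integers $v \ge k \ge 2$, a $(v,k)$-packing is a pair $(X,\mathcal{B})$ where $X$ is a set of $v$ points and $\mathcal{B}$ is a set of $k$-subsets of $X$ (blocks) such that every pair of distinct points lies in at most one block. A partial parallel class (PPC) is a set of pairwise disjoint blocks; its size is the number of blocks in it. ''The largest PPC has size $\rho$'' means that the packing contains a PPC of size $\rho$ but no PPC of size $\rho+1$. *)

(* Defs.v *)
From mathcomp Require Import all_boot.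
Set Implicit Arguments. Unset Strict Implicit. Unset Printing Implicit Defensive.

Definition is_packing (v k : nat) (B : {set {set 'I_v}}) : Prop :=
  (forall b, b \in B -> #|b| = k) /\
  (forall x y : 'I_v, x != y ->
     #|[set b in B | (x \in b) && (y \in b)]| <= 1).

Definition is_ppc (v : nat) (B P : {set {set 'I_v}}) : Prop :=
  P \subset B /\
  (forall b1 b2, b1 \in P -> b2 \in P -> b1 != b2 -> [disjoint b1 & b2]).

Definition largest_ppc (v : nat) (B : {set {set 'I_v}}) (rho : nat) : Prop :=
  (exists P, is_ppc B P /\ #|P| = rho) /\
  ~ (exists P, is_ppc B P /\ #|P| = rho.+1).

(* Main.v *)
Require Import Defs.
From HB Require Import structures.
From mathcomp Require Import all_boot all_algebra zify.
Set Implicit Arguments. Unset Strict Implicit. Unset Printing Implicit Defensive.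
Import GRing.Theory.

Definition good (m : nat) : Prop :=
  exists (J X V : finType) (T : J -> X -> 'I_3 -> V),
    #|J| = m /\ #|X| = m /\ #|V| = 3 * m /\
        (forall j x x' p p', T j x p = T j x' p' -> x = x' /\ p = p') /\
        (forall j j' x x' p p' q q', T j x p = T j' x' q -> T j x p' = T j' x' q' ->
             p != p' -> j = j') /\
      exists t : J -> X, forall j j' p p', T j (t j) p = T j' (t j') p' -> j = j' /\ p = p'.

Lemma ord3_le2 (p : 'I_3) : (p <= 2)%N. Proof. by rewrite -ltnS. Qed.

Ltac gsplit := split; [|split; [|split; [|split; [|split]]]].

Lemma good1 : good 1.
Proof.
exists unit, unit, 'I_3, (fun _ _ p => p); gsplit => //.
- by rewrite card_unit.
- by rewrite card_unit.
- by rewrite card_ord.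
- by move=> [] [] [] *.
- by case; case.
- by exists id => [] [] [] *.
Qed.

Section Mul.
Local Open Scope ring_scope.
Variable (G : finZmodType) (phi : G -> G).
Hypothesis phiP : forall p : nat, (p <= 2)%N -> injective (fun x => phi x + x *+ p).
Hypothesis tf2 : forall x : G, x *+ 2 = 0 -> x = 0.

Lemma mulnK_small (x : G) (a b : nat) : (a < b <= 2)%N -> x *+ a = x *+ b -> x = 0.
Proof.
move=> /andP[ab b2] e.
have : x *+ (b - a) = 0 by rewrite mulrnBr ?e ?subrr // ltnW.
have : (b - a = 1 \/ b - a = 2)%N by lia.
by case=> ->; [rewrite mulr1n | apply: tf2].
Qed.

Lemma diff_inj (x y : G) (a b : nat) : (a <= 2)%N -> (b <= 2)%N -> a != b ->
  y *+ a - x *+ a = y *+ b - x *+ b -> x = y.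
Proof.
move=> a2 b2 ab e; apply/eqP; rewrite eq_sym -subr_eq0; apply/eqP.
have e' : (y - x) *+ a = (y - x) *+ b by rewrite !mulrnBl.
case: (ltngtP a b) ab => // [lt|lt] _.
- by apply: (@mulnK_small _ a b) => //; rewrite lt.
- by apply: (@mulnK_small _ b a) => //; rewrite lt // e'.
Qed.

Lemma ab_eq (a b c d : G) : a + b = c + d -> a - c = d - b.
Proof. by move=> e; apply/eqP; rewrite subr_eq addrAC (addrC d) -e addrK. Qed.

Lemma good_mul m : good m -> good (m * #|G|).
Proof.
case=> J [X [V [T [cJ [cX [cV [Tinj [TD [t tP]]]]]]]]].
exists (J * G)%type, (X * G)%type, (V * G)%type,
  (fun j x p => (T j.1 x.1 p, x.2 + j.2 *+ p)); gsplit.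
- by rewrite card_prod cJ.
- by rewrite card_prod cX.
- by rewrite card_prod cV mulnA.
- move=> [j l] [x w] [x' w'] p p' /= [] /Tinj [-> ->] /addIr -> //.
- move=> [j l] [j' l'] [x w] [x' w'] p p' q q' /= [] e1 e2 [] f1 f2 pp.
  have jj := TD _ _ _ _ _ _ _ _ e1 f1 pp; subst j'.
  case: (Tinj _ _ _ _ _ e1) => xx pq; subst x' q.
  case: (Tinj _ _ _ _ _ f1) => _ pq; subst q'.
  congr (_, _).
  apply: (@diff_inj _ _ p p'); rewrite ?ord3_le2 //.
  by rewrite -(ab_eq e2) -(ab_eq f2).
- exists (fun j => (t j.1, phi j.2)) => [] [j l] [j' l'] p p' /= [] /tP [jj pp] e.
  subst j' p'; split => //; congr (_, _).
  by apply: (phiP (ord3_le2 p)).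
Qed.
End Mul.

Definition rown (d b p : nat) : nat * nat :=
  if d == 0 then (p, b) else if d == 1 then (b, p)
  else if d == 2 then (p, (p + b) %% 3) else (p, (2 * p + b) %% 3).

Lemma rown_lt d (b p : 'I_3) : ((rown d b p).1 < 3) && ((rown d b p).2 < 3).
Proof.
rewrite /rown; case: ifP => _; first by rewrite !ltn_ord.
case: ifP => _; first by rewrite !ltn_ord.
by case: ifP => _; rewrite ltn_ord ltn_pmod.
Qed.

Definition row d (b p : 'I_3) : 'I_3 * 'I_3 :=
  (inord (rown d b p).1, inord (rown d b p).2).

Arguments row : simpl never.

Lemma row_eq d d' b b' p p' : row d b p = row d' b' p' -> rown d b p = rown d' b' p'.
Proof.
case=> e1 e2; move: (rown_lt d b p) (rown_lt d' b' p') => /andP[a1 a2] /andP[c1 c2].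
have := congr1 (@nat_of_ord 3) e1; have := congr1 (@nat_of_ord 3) e2; rewrite !inordK //.
by case: (rown d b p) (rown d' b' p') {e1 e2 a1 a2 c1 c2} => ? ? [? ?] /= -> ->.
Qed.

Definition I3 := iota 0 3.
Definition I4 := iota 0 4.

Definition KLb : bool :=
  all (fun d => all (fun d' => all (fun b => all (fun b' => all (fun p => all (fun q =>
  all (fun p' => all (fun q' =>
    (rown d b p != rown d' b' p') || (rown d b q != rown d' b' q') || (p == q) ||
    [&& d == d', b == b', p == p' & q == q']) I3) I3) I3) I3) I3) I3) I4) I4.

Lemma KLb_true : KLb. Proof. by vm_compute. Qed.

Definition ILb : bool :=
  all (fun d => all (fun b => all (fun b' => all (fun p => all (fun p' =>
    (rown d b p != rown d b' p') || ((b == b') && (p == p'))) I3) I3) I3) I3) I4.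

Lemma ILb_true : ILb. Proof. by vm_compute. Qed.

Lemma memI3 (p : 'I_3) : (val p : nat) \in I3.
Proof. by rewrite mem_iota /= ltn_ord. Qed.

Lemma memI4 d : d <= 3 -> d \in I4.
Proof. by rewrite mem_iota /= ltnS. Qed.

Lemma row_KL d d' (b b' p q p' q' : 'I_3) : d <= 3 -> d' <= 3 ->
  row d b p = row d' b' p' -> row d b q = row d' b' q' -> p != q ->
  d = d' /\ b = b' /\ p = p' /\ q = q'.
Proof.
move=> /memI4 hd /memI4 hd' /row_eq r1 /row_eq r2 pq.
have := KLb_true; move/allP/(_ _ hd)/allP/(_ _ hd')/allP/(_ _ (memI3 b))/allP/(_ _ (memI3 b'))
  /allP/(_ _ (memI3 p))/allP/(_ _ (memI3 q))/allP/(_ _ (memI3 p'))/allP/(_ _ (memI3 q')).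
have pq' : ((p : nat) == q) = false by exact: negbTE pq.
rewrite r1 r2 !eqxx /= pq' /= => /and4P[/eqP -> /eqP bb /eqP pp /eqP qq].
by do !split; apply: val_inj.
Qed.

Lemma row_inj1 d (b b' p p' : 'I_3) : d <= 3 -> row d b p = row d b' p' -> b = b' /\ p = p'.
Proof.
move=> /memI4 hd /row_eq r1.
have := ILb_true; move/allP/(_ _ hd)/allP/(_ _ (memI3 b))/allP/(_ _ (memI3 b'))
  /allP/(_ _ (memI3 p))/allP/(_ _ (memI3 p')).
rewrite r1 eqxx /= => /andP[/eqP bb /eqP pp].
by split; apply: val_inj.
Qed.

Section CaseB.
Local Open Scope ring_scope.
Variable (G : finZmodType) (phi : G -> G) (e1 e2 : G).
Hypothesis phiP : forall p : nat, (p <= 2)%N -> injective (fun x => phi x + x *+ p).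
Hypothesis tf2 : forall x : G, x *+ 2 = 0 -> x = 0.
Hypothesis e1n0 : e1 != 0.
Hypothesis e2n0 : e2 != 0.
Hypothesis e12 : e1 != e2.

Definition eps (s : 'I_3) : G := if val s == 0%N then 0 else if val s == 1%N then e1 else e2.

Lemma eps_inj : injective eps.
Proof.
move=> [[|[|[|?]]] ?] [[|[|[|?]]] ?] //= e; apply: val_inj => //=; move: e; rewrite /eps /=.
- by move/eqP; rewrite eq_sym (negbTE e1n0).
- by move/eqP; rewrite eq_sym (negbTE e2n0).
- by move/eqP; rewrite (negbTE e1n0).
- by move/eqP; rewrite (negbTE e12).
- by move/eqP; rewrite (negbTE e2n0).
- by move/eqP; rewrite eq_sym (negbTE e12).
Qed.

Definition dir (s : 'I_3) (h : bool) : nat := if h then 0%N else (s + 1)%N.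

Lemma dir_le3 s h : (dir s h <= 3)%N.
Proof. by rewrite /dir; case: h => //; rewrite addn1 ltnS ord3_le2. Qed.

Lemma dir_inj s s' i : dir s (i == eps s) = dir s' (i == eps s') -> s = s'.
Proof.
rewrite /dir; case: (eqVneq i (eps s)) => [E1|N1]; case: (eqVneq i (eps s')) => [E2|N2];
  rewrite ?addn1 => h.
- by apply: eps_inj; rewrite -E1 -E2.
- discriminate.
- discriminate.
- by case: h => h; apply: val_inj.
Qed.

Definition TB (j : 'I_3 * G) (x : G * 'I_3) (p : 'I_3) : G * ('I_3 * 'I_3) :=
  (j.2 + phi x.1 + x.1 *+ p, row (dir j.1 (x.1 == eps j.1)) x.2 p).

Definition pos (s : 'I_3) (r : 'I_3 * 'I_3) : nat := if val s == 0%N then val r.2 else val r.1.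

Lemma pos_le2 s r : (pos s r <= 2)%N.
Proof. by rewrite /pos; case: ifP => _; apply: ord3_le2. Qed.

Lemma posP s i b (p : 'I_3) : i *+ p = i *+ pos s (row (dir s (i == eps s)) b p).
Proof.
case: (eqVneq i (eps s)) => [->|ne]; rewrite /pos /dir /row /rown /=.
  by case: s => [[|[|[|?]]] ?] //=; rewrite /eps /= ?mul0rn // inordK.
by case: s ne => [[|[|[|?]]] ?] //= ne; rewrite inordK.
Qed.

Lemma good_B : good (3 * #|G|).
Proof.
exists ('I_3 * G)%type, (G * 'I_3)%type, (G * ('I_3 * 'I_3))%type, TB; gsplit.
- by rewrite card_prod card_ord.
- by rewrite card_prod card_ord mulnC.
- by rewrite !card_prod !card_ord mulnC -mulnA.
- move=> [s y] [i b] [i' b'] p p' e.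
  have ec := congr1 fst e; have er := congr1 snd e; rewrite /= in ec er.
  have ec' : phi i + i *+ pos s (row (dir s (i == eps s)) b p) =
             phi i' + i' *+ pos s (row (dir s (i == eps s)) b p).
    rewrite -posP er -posP; apply: (addrI y); by rewrite !addrA.
  have ii := phiP (pos_le2 _ _) ec'; subst i'.
  by case: (row_inj1 (dir_le3 _ _) er) => -> ->.
- move=> [s y] [s' y'] [i b] [i' b'] p p' q q' E1 E2 pp.
  have c1 := congr1 fst E1; have r1 := congr1 snd E1; rewrite /= in c1 r1.
  have c2 := congr1 fst E2; have r2 := congr1 snd E2; rewrite /= in c2 r2.
  case: (row_KL (dir_le3 _ _) (dir_le3 _ _) r1 r2 pp) => dd [bb [pq pq']]; subst b' q q'.
  have ii : i = i'.
    apply: (diff_inj tf2 (a:=p) (b:=p')); rewrite ?ord3_le2 //.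
    by rewrite -(ab_eq c1) -(ab_eq c2).
  subst i'.
  move/addIr/addIr: c1 => yy; subst y'.
  by congr (_, _); exact: dir_inj dd.
- exists (fun j => (eps j.1, j.1)) => [] [s y] [s' y'] p p' e.
  have ec := congr1 fst e; have er := congr1 snd e; rewrite /= in ec er.
  rewrite !eqxx /dir in er.
  case: (row_inj1 (isT : (0 <= 3)%N) er) => ss pp; subst s' p'.
  by move/addIr/addIr: ec => ->.
Qed.
End CaseB.

Section Zq.
Local Open Scope ring_scope.
Variable q : nat.
Hypothesis q1 : (1 < q)%N.
Hypothesis q2 : coprime q 2.
Hypothesis q3 : coprime q 3.

Lemma Zq_inj (c : nat) : coprime q c -> injective (fun x : 'Z_q => x *+ c).
Proof.
move=> cop x y /=; rewrite -[x *+ c]mulr_natr -[y *+ c]mulr_natr; apply: mulIr.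
by rewrite unitZpE.
Qed.

Lemma Zq_phiP (p : nat) : (p <= 2)%N -> injective (fun x : 'Z_q => id x + x *+ p).
Proof.
move=> p2 x y /=; rewrite -!mulrS; apply: Zq_inj.
by case: p p2 => [|[|[|]]] // _; rewrite coprimen1.
Qed.

Lemma Zq_tf2 (x : 'Z_q) : x *+ 2 = 0 -> x = 0.
Proof. by move=> h; apply: (Zq_inj q2); rewrite /= h mul0rn. Qed.

Lemma Zq_card : #|'Z_q| = q.
Proof. by rewrite card_ord Zp_cast. Qed.

Lemma Zq_1n0 : (1 : 'Z_q) != 0.
Proof. exact: oner_neq0. Qed.

Lemma Zq_2n0 : (2%:R : 'Z_q) != 0.
Proof.
apply/eqP => h; have := Zq_tf2 (x := 1); rewrite h => /(_ erefl) /eqP.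
by rewrite (negbTE Zq_1n0).
Qed.

Lemma Zq_12 : (1 : 'Z_q) != 2%:R.
Proof.
apply/eqP => h; have /addrI h0 : (1 : 'Z_q) + 0 = 1 + 1 by rewrite addr0 {1}h mulr2n.
by move: (Zq_1n0); rewrite -h0 eqxx.
Qed.
End Zq.

Section F9.
Local Open Scope ring_scope.
Definition F9 := ('Z_3 * 'Z_3)%type.
HB.instance Definition _ := GRing.Zmodule.on F9.
HB.instance Definition _ := Finite.on F9.
Definition phi9 (x : F9) : F9 := (- x.2, x.1).
Lemma phi9B (x y : F9) : phi9 (x - y) = phi9 x - phi9 y.
Proof. by case: x y => [a b] [c d]; rewrite /phi9; congr (_, _); rewrite /= opprD. Qed.
Lemma ker9 (z : F9) (p : nat) : (p <= 2)%N -> (phi9 z + z *+ p == 0) ==> (z == 0).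
Proof.
case: z => [[[|[|[|?]]] ?] [[|[|[|?]]] ?]] //; case: p => [|[|[|?]]] //.
Qed.
Lemma tf9b (z : F9) : (z *+ 2 == 0) ==> (z == 0).
Proof. by case: z => [[[|[|[|?]]] ?] [[|[|[|?]]] ?]]. Qed.

Lemma phi9P (p : nat) : (p <= 2)%N -> injective (fun x : F9 => phi9 x + x *+ p).
Proof.
move=> p2 x y /= e; apply/eqP; rewrite -subr_eq0.
have := ker9 (x - y) p2; rewrite phi9B mulrnBl.
have -> : phi9 x - phi9 y + (x *+ p - y *+ p) = (phi9 x + x *+ p) - (phi9 y + y *+ p).
  by rewrite opprD !addrA (addrAC _ (- phi9 y)).
by rewrite e subrr eqxx.
Qed.

Lemma tf9 (x : F9) : x *+ 2 = 0 -> x = 0.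
Proof. by move=> h; apply/eqP; have := tf9b x; rewrite h eqxx. Qed.

Lemma card9 : #|{: F9}| = 9.
Proof. by rewrite card_prod card_ord. Qed.

Lemma f9e1 : ((1, 0) : F9) != 0. Proof. by []. Qed.
Lemma f9e2 : ((0, 1) : F9) != 0. Proof. by []. Qed.
Lemma f9e12 : ((1, 0) : F9) != (0, 1). Proof. by []. Qed.
End F9.

Lemma good_odd m : odd m -> m != 3 -> good m.
Proof.
elim/ltn_ind: m => m IH om m3.
case: (boolP (9 %| m)) => [d9|nd9].
  have mpos : (0 < m)%N := odd_gt0 om.
  have hm : m = m %/ 9 * 9 by rewrite divnK.
  have om' : odd (m %/ 9) by move: om; rewrite {1}hm oddM => /andP[].
  have lt : (m %/ 9 < m)%N by rewrite ltn_Pdiv.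
  rewrite hm.
  case: (eqVneq (m %/ 9) 3) => [->|m'3].
    by have := good_B phi9P tf9 f9e1 f9e2 f9e12; rewrite card9 mulnC.
  by have := good_mul phi9P tf9 (IH _ lt om' m'3); rewrite card9.
case: (boolP (3 %| m)) => [d3|nd3].
  have [q hm] : exists q, m = 3 * q by exists (m %/ 3); rewrite mulnC divnK.
  subst m.
  have oq : odd q by move: om; rewrite oddM.
  have nq3 : ~~ (3 %| q).
    by apply: contra nd9 => h; rewrite (_ : 9 = 3 * 3) // dvdn_pmul2l.
  have q1 : (1 < q)%N by case: q oq nq3 m3 {IH om nd9 d3} => [|[|q']].
  have q2 : coprime q 2 by rewrite coprime_sym prime_coprime // dvdn2 oq.
  have q3 : coprime q 3 by rewrite coprime_sym prime_coprime.
  have := good_B (@Zq_phiP q q1 q2 q3) (@Zq_tf2 q q1 q2) (@Zq_1n0 q)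
     (@Zq_2n0 q q1 q2) (@Zq_12 q).
  by rewrite Zq_card.
case: (eqVneq m 1) => [->|m1]; first exact: good1.
have q1 : (1 < m)%N by case: m om m1 {IH m3 nd9 nd3} => [|[|]].
have q2 : coprime m 2 by rewrite coprime_sym prime_coprime // dvdn2 om.
have q3 : coprime m 3 by rewrite coprime_sym prime_coprime.
have := good_mul (@Zq_phiP m q1 q2 q3) (@Zq_tf2 m q1 q2) good1.
by rewrite Zq_card ?mul1n.
Qed.

Section Assemble.
Variables (n rho m : nat) (J X V : finType) (T : J -> X -> 'I_3 -> V).
Hypotheses (r1 : 0 < rho) (le : rho <= #|J|) (hV : #|V| = n) (cX : #|X| = m).
Hypothesis Tinj : forall j x x' p p', T j x p = T j x' p' -> x = x' /\ p = p'.
Hypothesis TD : forall j j' x x' p p' q q', T j x p = T j' x' q -> T j x p' = T j' x' q' ->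
             p != p' -> j = j'.
Variable t : J -> X.
Hypothesis tP : forall j j' p p', T j (t j) p = T j' (t j') p' -> j = j' /\ p = p'.

Definition e (i : 'I_rho) : J := enum_val (widen_ord le i).
Lemma e_inj : injective e.
Proof. by move=> i j /enum_val_inj /(congr1 val) /= /val_inj. Qed.

Definition cv (v : V) : 'I_(n + rho) := lshift rho (cast_ord hV (enum_rank v)).
Definition inf (i : 'I_rho) : 'I_(n + rho) := rshift n i.
Lemma cv_inj : injective cv.
Proof. by move=> u v /lshift_inj /cast_ord_inj /enum_rank_inj. Qed.
Lemma inf_inj : injective inf.
Proof. exact: rshift_inj. Qed.
Lemma cv_inf v i : (cv v == inf i) = false.
Proof. exact: eq_lrshift. Qed.

Definition blk (ix : 'I_rho * X) : {set 'I_(n + rho)} :=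
  inf ix.1 |: [set cv (T (e ix.1) ix.2 p) | p : 'I_3].

Lemma inblk z i x : z \in blk (i, x) -> z = inf i \/ exists p, z = cv (T (e i) x p).
Proof.
by rewrite /blk !inE => /orP[/eqP ->|/imsetP[p _ ->]]; [left|right; exists p].
Qed.

Lemma inf_blk i x : inf i \in blk (i, x).
Proof. by rewrite /blk !inE eqxx. Qed.

Lemma cv_blk i x p : cv (T (e i) x p) \in blk (i, x).
Proof. by rewrite /blk !inE; apply/orP; right; apply/imsetP; exists p. Qed.

Lemma inf_blk' i i' x : inf i \in blk (i', x) -> i = i'.
Proof.
case/inblk => [/inf_inj //|[p /eqP]]; by rewrite eq_sym cv_inf.
Qed.

Lemma cv_blk' v i x : cv v \in blk (i, x) -> exists p, v = T (e i) x p.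
Proof.
case/inblk => [/eqP|[p /cv_inj ->]]; [by rewrite cv_inf | by exists p].
Qed.

Lemma blk_det z1 z2 a b : z1 != z2 -> z1 \in blk a -> z2 \in blk a ->
  z1 \in blk b -> z2 \in blk b -> a = b.
Proof.
case: a b => [i x] [i' x'] ne h1 h2 h1' h2'.
case/inblk: h1 => [E1|[p1 E1]]; subst z1.
  have ii := inf_blk' h1'; subst i'.
  case/inblk: h2 => [E2|[p2 E2]]; subst z2; first by rewrite eqxx in ne.
  by case/cv_blk': h2' => p2' /Tinj [-> _].
case/cv_blk': h1' => q1 E1.
case/inblk: h2 => [E2|[p2 E2]]; subst z2.
  by have ii := inf_blk' h2'; subst i'; case: (Tinj E1) => ->.
case/cv_blk': h2' => q2 E2.
have pp : p1 != p2 by apply: contra ne => /eqP ->.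
have ii := e_inj (TD E1 E2 pp); subst i'.
by case: (Tinj E1) => ->.
Qed.

Lemma blk_inj : injective blk.
Proof.
move=> [i x] b E.
have ne : inf i != cv (T (e i) x ord0) by rewrite eq_sym cv_inf.
apply: (blk_det ne); rewrite ?inf_blk ?cv_blk // -E ?inf_blk ?cv_blk //.
Qed.

Definition B := [set blk ix | ix : 'I_rho * X].

Lemma card_blk ix : #|blk ix| = 4.
Proof.
case: ix => i x; rewrite /blk cardsU1 card_imset /=.
  rewrite card_ord; case: imsetP => // -[p _ /eqP]; by rewrite eq_sym cv_inf.
by move=> p q /cv_inj /Tinj [].
Qed.

Lemma packB : is_packing 4 B.
Proof.
split; first by move=> b /imsetP[ix _ ->]; exact: card_blk.
move=> z1 z2 ne; apply/card_le1_eqP => b1 b2.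
rewrite !inE => /andP[/imsetP[a _ ->] /andP[h1 h2]] /andP[/imsetP[a' _ ->] /andP[h1' h2']].
by rewrite (blk_det ne h1 h2 h1' h2').
Qed.

Lemma cardB : #|B| = rho * m.
Proof. by rewrite card_imset; [rewrite card_prod card_ord cX | exact: blk_inj]. Qed.

Definition P0 := [set blk (i, t (e i)) | i : 'I_rho].

Lemma ppcP0 : is_ppc B P0 /\ #|P0| = rho.
Proof.
split; last first.
  by rewrite card_imset ?card_ord // => i j /blk_inj [].
split.
  by apply/subsetP => b /imsetP[i _ ->]; apply/imsetP; exists (i, t (e i)).
move=> b1 b2 /imsetP[i _ ->] /imsetP[j _ ->] ne.
rewrite -setI_eq0; apply/eqP/setP => z; rewrite in_set0 in_setI; apply/negbTE/negP => /andP[h1 h2].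
have ij : i != j by apply: contra ne => /eqP ->.
case/inblk: h1 => [E|[p E]]; subst z.
  by move: ij; rewrite (inf_blk' h2) eqxx.
case/cv_blk': h2 => q /tP [E _]; by move: ij; rewrite (e_inj E) eqxx.
Qed.

Lemma noppc : ~ (exists P, is_ppc B P /\ #|P| = rho.+1).
Proof.
move=> [P [[sPB dP] cP]].
pose i0 : 'I_rho := Ordinal r1.
pose f (b : {set 'I_(n + rho)}) : 'I_rho := odflt i0 [pick i | inf i \in b].
have fP : forall b, b \in P -> inf (f b) \in b.
  move=> b bP; have /imsetP[[i x] _ bE] := subsetP sPB b bP.
  rewrite /f; case: pickP => [j //|/(_ i)]; by rewrite bE inf_blk.
have finj : {in P &, injective f}.
  move=> b1 b2 h1 h2 E; apply/eqP; apply/negP => /negP ne.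
  have := dP _ _ h1 h2 ne => /disjointFr /(_ (fP _ h1)); by rewrite E fP.
have := max_card (mem [set f b | b in P]).
by rewrite card_in_imset // cP card_ord ltnn.
Qed.
End Assemble.

Theorem theorem2p2 (n rho : nat) :
  0 < n -> n %% 6 = 3 ->
  n \notin [:: 9; 15; 21; 141; 153; 165; 177; 189; 231; 249; 261; 285; 351; 357] ->
  1 <= rho -> 3 * rho <= n ->
  exists B : {set {set 'I_(n + rho)}},
    is_packing 4 B /\ #|B| * 3 = rho * n /\ largest_ppc B rho.
Proof.
move=> n0 n6 nex r1 r3.
have [m hn] : exists m, n = 3 * m by exists (n %/ 3); lia.
have om : odd m.
  have : m %% 2 = 1 by lia.
  by rewrite modn2; case: (odd m).
have m3 : m != 3 by apply/eqP => E; move: nex; rewrite hn E.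
have [J [X [V [T [cJ [cX [cV [Tinj [TD [t tP]]]]]]]]]] := good_odd om m3.
have le : rho <= #|J| by rewrite cJ; lia.
have hV : #|V| = n by rewrite cV hn.
exists (B T le hV); split; first exact: (packB le hV Tinj TD).
split.
  rewrite (cardB le hV cX Tinj TD); lia.
split.
  by exists (P0 T le hV t); apply: ppcP0.
exact: (noppc r1 (le := le) (hV := hV)).
Qed.
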